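(* Let $$\alpha=1+\frac16\left(\sqrt[3]{54-6\sqrt{33}}+\sqrt[3]{54+6\sqrt{33}}\right)\approx 2.1915,\qquad \beta=1+\frac13\left(\sqrt[3]{54-6\sqrt{33}}+\sqrt[3]{54+6\sqrt{33}}\right)\approx 3.3830,$$ let $g(x)=\alpha x(1-x)$, $h(x)=\beta x(1-x)$, and let $$p_\pm=\frac{\beta+1\pm\sqrt{(\beta+1)(\beta-3)}}{2\beta}$$ be the period-2 points of $h$. Then $h\!\left(\frac{\alpha-1}{\alpha}\right)=p_+$, $g(p_-)=\frac{\alpha-1}{\alpha}$, $g\!\left(\frac{\beta-1}{\beta}\right)=p_-$, $g\!\left(\frac1\beta\right)=p_-$, and $g(p_+)=\frac1\beta$. Consequently the set $\Lambda=\left\{\frac{\alpha-1}{\alpha},\ \frac{\beta-1}{\beta},\ p_-,\ p_+,\ \frac1\beta\right\}$ consists of five points, satisfies $\Lambda=g(\Lambda)\cup h(\Lambda)$ (a 5-point toss-and-catch), and contains the bridging point $\frac1\beta$, which is a periodic point of neither $g$ nor $h$.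
   Context: For $\gamma\in\mathbb{R}$ let $f_\gamma(x)=\gamma x(1-x)$ denote the logistic map; its nontrivial fixed point is $\frac{\gamma-1}{\gamma}$. The logistic IFS is the pair $\{g,h\}=\{f_\alpha,f_\beta\}$ with $\alpha<\beta$, where at each step $g$ is applied with probability $p\in(0,1)$ and $h$ with probability $1-p$, independently. An invariant set of the IFS is a set $\Lambda$ with $\Lambda=g(\Lambda)\cup h(\Lambda)$; a finite invariant set with $n$ points is called an $n$-point toss-and-catch. A bridging point is a point of $\Lambda$ that belongs to neither the union of all periodic orbits of $g$ nor the union of all periodic orbits of $h$. *)

(* Defs.v *)
From Stdlib Require Import Reals Lra List.
Open Scope R_scope.

Definition logistic (gamma x : R) : R := gamma * x * (1 - x).

(* real cube root of a positive real (both radicands below are positive) *)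
Definition cbrt (x : R) : R := Rpower x (1/3).

Definition S3 : R := cbrt (54 - 6 * sqrt 33) + cbrt (54 + 6 * sqrt 33).
Definition alpha0 : R := 1 + S3 / 6.
Definition beta0 : R := 1 + S3 / 3.

Definition pplus (b : R) : R := (b + 1 + sqrt ((b + 1) * (b - 3))) / (2 * b).
Definition pminus (b : R) : R := (b + 1 - sqrt ((b + 1) * (b - 3))) / (2 * b).

Definition periodic_point (f : R -> R) (x : R) : Prop :=
  exists n : nat, (0 < n)%nat /\ Nat.iter n f x = x.

Definition invariant_set (g h : R -> R) (L : list R) : Prop :=
  forall y, In y L <-> exists x, In x L /\ (y = g x \/ y = h x).

Definition bridging_point (g h : R -> R) (L : list R) (x : R) : Prop :=
  In x L /\ ~ periodic_point g x /\ ~ periodic_point h x.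

(* Main.v *)
Require Import Defs.
From Stdlib Require Import Reals List.
From Stdlib Require Import Lra Psatz.
Open Scope R_scope.

Lemma cbrt_cube x : 0 < x -> (cbrt x)^3 = x.
Proof. intro H. unfold cbrt. rewrite <- Rpower_pow by (apply exp_pos).
 rewrite Rpower_mult. replace (1/3 * INR 3) with 1 by (simpl; field). apply Rpower_1; auto. Qed.
Lemma cbrt_pos x : 0 < cbrt x. Proof. apply exp_pos. Qed.
Lemma S3_eq : S3^3 = 36*S3 + 108.
Proof.
 assert (Hs: sqrt 33 < 9). { rewrite <- (sqrt_square 9) by lra. apply sqrt_lt_1; lra. }
 assert (Hs0: 0 <= sqrt 33) by apply sqrt_pos.
 assert (Hs2: sqrt 33 * sqrt 33 = 33) by (apply sqrt_sqrt; lra).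
 unfold S3. set (u := cbrt _). set (v := cbrt (54 + _)).
 assert (Hu: u^3 = 54 - 6*sqrt 33) by (apply cbrt_cube; lra).
 assert (Hv: v^3 = 54 + 6*sqrt 33) by (apply cbrt_cube; lra).
 assert (Hu0: 0 < u) by apply cbrt_pos. assert (Hv0: 0 < v) by apply cbrt_pos.
 assert (Hw: (u*v)^3 = 1728). { rewrite Rpow_mult_distr, Hu, Hv. nra. }
 assert (Huv: u*v = 12).
 { set (w := u*v) in *. assert (0 < w) by (apply Rmult_lt_0_compat; auto).
   assert ((w-12)*(w^2+12*w+144) = 0) by nra.
   apply Rmult_integral in H0. destruct H0; nra. }
 replace ((u+v)^3) with (u^3+v^3+3*(u*v)*(u+v)) by ring. rewrite Hu, Hv, Huv. ring.
Qed.

Lemma t_bounds t : 2*t^3-2*t-1=0 -> 1.19 < t < 1.2.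
Proof.
intros H. split.
- destruct (Rlt_or_le 1.19 t); auto.
  assert (0 < t^2+1.19*t+0.4161) by (pose proof (pow2_ge_0 (t+0.595)); nra).
  assert (0 <= (1.19 - t)*(t^2+1.19*t+0.4161)) by (apply Rmult_le_pos; lra). nra.
- destruct (Rlt_or_le t 1.2); auto.
  assert (0 < t^2+1.2*t+0.44) by (pose proof (pow2_ge_0 (t+0.6)); nra).
  assert (0 <= (t-1.2)*(t^2+1.2*t+0.44)) by (apply Rmult_le_pos; lra). nra.
Qed.

Lemma iter_fix (f : R -> R) x y n : f x = y -> f y = y -> (0 < n)%nat -> Nat.iter n f x = y.
Proof.
 intros H1 H2 Hn. induction n as [|n IH]; [lia|].
 destruct n as [|n]; simpl in *. exact H1. rewrite IH by lia. exact H2.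
Qed.

Lemma iter_shift (f : R -> R) n x : Nat.iter (S n) f x = Nat.iter n f (f x).
Proof. induction n as [|n IH]; simpl; auto. simpl in IH. rewrite IH. reflexivity. Qed.

Section Core.
Variable t : R.
Hypothesis Ht : 2*t^3-2*t-1=0.

Let P3 : t^3 = t + 1/2. Proof. lra. Qed.
Let P4 : t^4 = t^2 + t/2. Proof. replace (t^4) with (t*t^3) by field; rewrite P3; field. Qed.
Let P5 : t^5 = t^2/2 + t + 1/2. Proof. replace (t^5) with (t*t^4) by field; rewrite P4; replace (t*(t^2+t/2)) with (t^3 + t^2/2) by field; rewrite P3; field. Qed.
Let P6 : t^6 = t^2 + t + 1/4. Proof. replace (t^6) with (t*t^5) by field; rewrite P5; replace (t*(t^2/2+t+1/2)) with (t^3/2 + t^2 + t/2) by field; rewrite P3; field. Qed.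
Let Hb := t_bounds t Ht.

Definition fA := (1+t-1)/(1+t).
Definition fB := (1+2*t-1)/(1+2*t).
Definition PP := (1+2*t+1 + 2*(2*t^2-t-1))/(2*(1+2*t)).
Definition PM := (1+2*t+1 - 2*(2*t^2-t-1))/(2*(1+2*t)).
Definition Q := 1/(1+2*t).

Ltac go := unfold fA, fB, PP, PM, Q, logistic; field_simplify_eq; [ pose proof P3; pose proof P4; pose proof P5; pose proof P6; nra | lra ..].

Lemma e1 : logistic (1+2*t) fA = PP. Proof. go. Qed.
Lemma e2 : logistic (1+t) PM = fA. Proof. go. Qed.
Lemma e3 : logistic (1+t) fB = PM. Proof. go. Qed.
Lemma e4 : logistic (1+t) Q = PM. Proof. go. Qed.
Lemma e5 : logistic (1+t) PP = Q. Proof. go. Qed.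
Lemma e6 : logistic (1+2*t) PM = PP. Proof. go. Qed.
Lemma e7 : logistic (1+2*t) PP = PM. Proof. go. Qed.
Lemma e8 : logistic (1+2*t) Q = fB. Proof. go. Qed.
Lemma e9 : logistic (1+2*t) fB = fB. Proof. go. Qed.
Lemma e10 : logistic (1+t) fA = fA. Proof. go. Qed.

Lemma div_lt x y d1 d2 : 0 < d1 -> 0 < d2 -> x*d2 < y*d1 -> x/d1 < y/d2.
Proof.
 intros H1 H2 H. apply (Rmult_lt_reg_r (d1*d2)). nra.
 replace (x/d1*(d1*d2)) with (x*d2) by (field; lra).
 replace (y/d2*(d1*d2)) with (y*d1) by (field; lra). exact H.
Qed.
Ltac lt := unfold fA, fB, PP, PM, Q; apply div_lt; [lra|lra| pose proof P3; pose proof P4; nra].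
Lemma o1 : Q < PM. Proof. lt. Qed.
Lemma o2 : PM < fA. Proof. lt. Qed.
Lemma o3 : fA < fB. Proof. lt. Qed.
Lemma o4 : fB < PP. Proof. lt. Qed.

End Core.

Theorem mainTheorem3 :
  let a := alpha0 in
  let b := beta0 in
  let g := logistic a in
  let h := logistic b in
  let pp := pplus b in
  let pm := pminus b in
  let L := (a - 1) / a :: (b - 1) / b :: pm :: pp :: 1 / b :: nil in
  h ((a - 1) / a) = pp /\
  g pm = (a - 1) / a /\
  g ((b - 1) / b) = pm /\
  g (1 / b) = pm /\
  g pp = 1 / b /\
  NoDup L /\
  invariant_set g h L /\
  bridging_point g h L (1 / b).
Proof.
  set (t := S3/6).
  assert (Ht : 2*t^3-2*t-1=0).
  { pose proof S3_eq. unfold t. field_simplify. lra. }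
  pose proof (t_bounds t Ht) as Hbd.
  assert (Ha : alpha0 = 1+t) by (unfold alpha0, t; field).
  assert (Hb : beta0 = 1+2*t) by (unfold beta0, t; field).
  assert (Hsq : sqrt ((1+2*t+1)*(1+2*t-3)) = 2*(2*t^2-t-1)).
  { apply sqrt_lem_1. nra. nra.
    assert (t^4 = t^2 + t/2) by (replace (t^4) with (t*t^3) by field; nra).
    nra. }
  cbv zeta. rewrite Ha, Hb. unfold pplus, pminus. rewrite Hsq.
  change ((1+t-1)/(1+t)) with (fA t).
  change ((1+2*t-1)/(1+2*t)) with (fB t).
  change ((1+2*t+1 + 2*(2*t^2-t-1))/(2*(1+2*t))) with (PP t).
  change ((1+2*t+1 - 2*(2*t^2-t-1))/(2*(1+2*t))) with (PM t).
  change (1/(1+2*t)) with (Q t).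
  pose proof (e1 t Ht). pose proof (e2 t Ht). pose proof (e3 t Ht).
  pose proof (e4 t Ht). pose proof (e5 t Ht). pose proof (e6 t Ht).
  pose proof (e7 t Ht). pose proof (e8 t Ht). pose proof (e9 t Ht).
  pose proof (e10 t Ht).
  pose proof (o1 t Ht). pose proof (o2 t Ht). pose proof (o3 t Ht). pose proof (o4 t Ht).
  set (g := logistic (1+t)) in *. set (h := logistic (1+2*t)) in *.
  set (A := fA t) in *. set (B := fB t) in *. set (pp := PP t) in *.
  set (pm := PM t) in *. set (q := Q t) in *.
  split; [auto|]. split; [auto|]. split; [auto|]. split; [auto|]. split; [auto|].
  split.
  { repeat constructor; simpl; intuition lra. }
  split.
  { intro y; split.
    - intros [E|[E|[E|[E|[E|[]]]]]]; subst y.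
      + exists A; simpl; split; [tauto| first [left; congruence | right; congruence]].
      + exists B; simpl; split; [tauto| first [left; congruence | right; congruence]].
      + exists B; simpl; split; [tauto| first [left; congruence | right; congruence]].
      + exists A; simpl; split; [tauto| first [left; congruence | right; congruence]].
      + exists pp; simpl; split; [tauto| first [left; congruence | right; congruence]].
    - intros [x [Hx [E|E]]]; subst y;
      destruct Hx as [E'|[E'|[E'|[E'|[E'|[]]]]]]; subst x; simpl;
      first [ rewrite H; simpl; tauto | rewrite H0; simpl; tauto | rewrite H1; simpl; tauto
            | rewrite H2; simpl; tauto | rewrite H3; simpl; tauto | rewrite H4; simpl; tauto
            | rewrite H5; simpl; tauto | rewrite H6; simpl; tauto | rewrite H7; simpl; tauto
            | rewrite H8; simpl; tauto ]. }
  split; [simpl; tauto|]. split.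
  - intros [n [Hn Hit]].
    destruct n as [|n]; [lia|].
    destruct n as [|n].
    + simpl in Hit. lra.
    + assert (Nat.iter (S (S n)) g q = A).
      { rewrite iter_shift. rewrite H2. apply iter_fix; auto. lia. }
      lra.
  - intros [n [Hn Hit]].
    rewrite (iter_fix h q B n H6 H7 Hn) in Hit. lra.
Qed.
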